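(* Let $h$ be a penalty function on $\Delta$ and let $p$ lie in the relative interior of $\Delta$. If $F_h(p,y_j)$ is bounded for a sequence $y_j\in\mathbb{R}^n$, then $y_{j,\alpha}-y_{j,\beta}$ is bounded for all $\alpha,\beta\in\{1,\dots,n\}$.
   Context: $\Delta$ is the unit simplex of $\mathbb{R}^n$. A penalty function on $\Delta$ is $h:\Delta\to\mathbb{R}$, continuous, $C^\infty$ on the relative interior of every face of $\Delta$, and strongly convex: $h(tx_1+(1-t)x_2)\le th(x_1)+(1-t)h(x_2)-\tfrac12Kt(1-t)\|x_1-x_2\|^2$ for some $K>0$. $h^*(y)=\max_{x\in\Delta}\{\langle y,x\rangle-h(x)\}$; Fenchel coupling $F_h(p,y)=h(p)+h^*(y)-\langle y,p\rangle$. *)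

(* Defs.v *)
(* vectors of R^n are row vectors 'rV[R]_n,
   coordinate i of x is  x ord0 i. *)
From HB Require Import structures.
From mathcomp Require Import all_boot all_order all_algebra.
From mathcomp Require Import all_classical all_reals all_analysis.
Set Implicit Arguments. Unset Strict Implicit. Unset Printing Implicit Defensive.
Import Order.TTheory GRing.Theory Num.Theory.
Import numFieldNormedType.Exports.
Local Open Scope classical_set_scope.
Local Open Scope ring_scope.

Section Simplex.
Variables (R : realType) (n : nat).
Notation V := 'rV[R]_n.

Definition dotp (y x : V) : R := \sum_(i < n) y ord0 i * x ord0 i.
Definition sqnorm (x : V) : R := \sum_(i < n) (x ord0 i) ^+ 2.

Definition simplex : set V :=
  [set x | (forall i, 0 <= x ord0 i) /\ \sum_(i < n) x ord0 i = 1].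

Definition simplex_ri : set V :=
  [set x | (forall i, 0 < x ord0 i) /\ \sum_(i < n) x ord0 i = 1].

(* relative interior of the face of the simplex spanned by the vertices e_i, i in S *)
Definition face_ri (S : {set 'I_n}) : set V :=
  [set x | simplex x /\ forall i, (0 < x ord0 i) = (i \in S)].

Definition face_dir (S : {set 'I_n}) : set V :=
  [set v | (forall i, i \notin S -> v ord0 i = 0) /\ \sum_(i < n) v ord0 i = 0].

Definition cont_on (U : set V) (f : V -> R) : Prop :=
  forall x, U x -> f @ within U (nbhs x) --> f x.

(* C^k on the relatively open set U of an affine subspace with direction space T:
   all iterated directional derivatives along T of order <= k exist on U and are
   continuous on U *)
Fixpoint smooth_k (k : nat) (U T : set V) (f : V -> R) : Prop :=
  match k with
  | 0 => cont_on U f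
  | k.+1 => cont_on U f /\
      forall v, T v -> (forall x, U x -> derivable f x v) /\
                       smooth_k k U T (fun x => 'D_v f x)
  end.

Definition smooth_on (U T : set V) (f : V -> R) : Prop :=
  forall k, smooth_k k U T f.

(* penalty function on the simplex (only the values on the simplex matter) *)
Definition penalty (h : V -> R) : Prop :=
  cont_on simplex h /\
  (forall S : {set 'I_n}, smooth_on (face_ri S) (face_dir S) h) /\
  exists K : R, 0 < K /\
    forall x1 x2 t, simplex x1 -> simplex x2 -> 0 <= t <= 1 ->
      h (t *: x1 + (1 - t) *: x2) <=
        t * h x1 + (1 - t) * h x2 - 2^-1 * K * t * (1 - t) * sqnorm (x1 - x2).

(* convex conjugate: h*(y) = max_{x in simplex} <y,x> - h(x) (written as a sup;
   the max is attained for continuous h) *)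
Definition hstar (h : V -> R) (y : V) : R :=
  sup [set r | exists2 x, simplex x & r = dotp y x - h x].

Definition fenchel (h : V -> R) (p y : V) : R := h p + hstar h y - dotp y p.

End Simplex.

(* Main.v *)
Require Import Defs.
From HB Require Import structures.
From mathcomp Require Import all_boot all_order all_algebra.
From mathcomp Require Import all_classical all_reals all_analysis.
From mathcomp Require Import lra.
Import Order.TTheory GRing.Theory Num.Theory.
Import numFieldNormedType.Exports.
Local Open Scope classical_set_scope.
Local Open Scope ring_scope.

Lemma sum_cont (R : realType) (n : nat) (r : seq 'I_n) :
  continuous (fun v : 'rV[R]_n => \sum_(i <- r) v ord0 i).
Proof.
elim: r => [|i r IH].
  under eq_fun do rewrite big_nil. exact: cst_continuous.
under eq_fun do rewrite big_cons.
move=> x; apply: continuousD; first exact: coord_continuous.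
exact: IH.
Qed.

Lemma simplex_compact (R : realType) (n : nat) : compact (simplex (R:=R) (n:=n)).
Proof.
have -> : simplex (R:=R) (n:=n) =
  [set v : 'rV[R]_n | forall i, `[0, 1]%classic (v ord0 i)] `&`
  ((fun v : 'rV[R]_n => \sum_(i < n) v ord0 i) @^-1` [set x | x = 1]).
  apply/seteqP; split => v /=.
    move=> [H0 H1]; split => // i; rewrite /= in_itv /= H0 /=.
    by rewrite -H1 (bigD1 i) //= lerDl sumr_ge0.
  by move=> [H0 H1]; split => // i; have := H0 i; rewrite in_itv /= => /andP[].
apply: compact_closedI; first by apply: (@rV_compact R n (fun=> `[0, 1]%classic)) => i; exact: segment_compact.
apply: preimage_closed; last exact: closed_eq.
by move=> x _; exact: sum_cont.
Qed.

Lemma h_bounded (R : realType) (n : nat) (h : 'rV[R]_n -> R) :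
  cont_on (simplex (R:=R) (n:=n)) h ->
  exists B : R, 0 <= B /\ forall x, simplex x -> `|h x| <= B.
Proof.
move=> hc.
have hc' : {within simplex (R:=R) (n:=n), continuous h}.
  by apply/subspace_continuousP.
have := compact_bounded (continuous_compact hc' (@simplex_compact R n)).
case=> M [_ HM].
exists (`|M| + 1); split; first by rewrite addr_ge0.
move=> x sx; apply: (HM (`|M| + 1)); last by exists x.
by rewrite (le_lt_trans (ler_norm M)) // ltrDl.
Qed.
Lemma simplex_le1 (R : realType) (n : nat) (x : 'rV[R]_n) i :
  simplex x -> x ord0 i <= 1.
Proof. by move=> [H0 H1]; rewrite -H1 (bigD1 i) //= lerDl sumr_ge0. Qed.

Lemma dotp_le (R : realType) (n : nat) (x y : 'rV[R]_n) :
  simplex x -> dotp y x <= \sum_(i < n) `|y ord0 i|.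
Proof.
move=> sx; rewrite /dotp; apply: ler_sum => i _.
apply: (le_trans (ler_norm _)); rewrite normrM.
rewrite -[X in _ <= X]mulr1; apply: ler_wpM2l => //.
by rewrite ger0_norm; [apply: simplex_le1 | case: sx].
Qed.


Lemma hstar_ge (R : realType) (n : nat) (h : 'rV[R]_n -> R) B (y x : 'rV[R]_n) :
  (forall x, simplex x -> `|h x| <= B) -> simplex x ->
  dotp y x - h x <= hstar h y.
Proof.
move=> hB sx; apply: sup_upper_bound; last by exists x.
split; first by exists (dotp y x - h x); exists x.
exists (\sum_(i < n) `|y ord0 i| + B) => r [z sz ->].
apply: lerD; first exact: dotp_le.
by rewrite (le_trans (ler_norm _)) // normrN hB.
Qed.

Definition dvec (R : realType) {n : nat} (a b : 'I_n) : 'rV[R]_n :=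
  \row_i ((i == a)%:R - (i == b)%:R).

Lemma sum_delta (R : realType) (n : nat) (a : 'I_n) (f : 'I_n -> R) :
  \sum_(i < n) f i * (i == a)%:R = f a.
Proof.
rewrite (bigD1 a) //= eqxx mulr1 big1 ?addr0 // => i /negbTE ->.
by rewrite mulr0.
Qed.

Lemma shift_simplex (R : realType) (n : nat) (p : 'rV[R]_n) (a b : 'I_n) :
  simplex_ri p -> simplex (p + p ord0 b *: dvec R a b).
Proof.
move=> [Hp Hs]; split.
  move=> i; rewrite !mxE.
  case: (eqVneq i b) => [->|nib].
    rewrite mulrBr mulr1 addrCA subrr addr0.
    by apply: mulr_ge0; [exact: ltW|].
  rewrite subr0; apply: addr_ge0; first exact: ltW.
  by apply: mulr_ge0; [exact: ltW|].
under eq_bigr do rewrite !mxE.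
rewrite big_split /= Hs -mulr_sumr.
under eq_bigr do rewrite -[X in X - _]mul1r -[X in _ - X]mul1r.
by rewrite sumrB !sum_delta subrr mulr0 addr0.
Qed.

Lemma simplex_ri_simplex (R : realType) (n : nat) (p : 'rV[R]_n) :
  simplex_ri p -> simplex p.
Proof. by move=> [H0 H1]; split => // i; exact: ltW. Qed.

Lemma dotp_shift (R : realType) (n : nat) (p y : 'rV[R]_n) (a b : 'I_n) s :
  dotp y (p + s *: dvec R a b) = dotp y p + s * (y ord0 a - y ord0 b).
Proof.
rewrite /dotp; under eq_bigr do rewrite !mxE mulrDr.
rewrite big_split /=; congr (_ + _).
under eq_bigr do rewrite mulrCA mulrBr.
by rewrite -mulr_sumr sumrB !sum_delta.
Qed.

Theorem propositionC5 (R : realType) (n : nat) (h : 'rV[R]_n -> R)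
  (p : 'rV[R]_n) (y : nat -> 'rV[R]_n) :
  penalty h -> simplex_ri p ->
  (exists M : R, forall j, `|fenchel h p (y j)| <= M) ->
  forall a b : 'I_n, exists M : R, forall j, `|y j ord0 a - y j ord0 b| <= M.
Proof.
move=> [hc _] sp [M HM] a b.
have [B [B0 hB]] := h_bounded _ _ _ hc.
have M0 : 0 <= M by apply: le_trans (HM 0%N).
have key : forall j (a b : 'I_n),
    y j ord0 a - y j ord0 b <= (M + 2 * B) / p ord0 b.
  move=> j a' b'.
  have pb : 0 < p ord0 b' by case: sp.
  rewrite ler_pdivlMr // mulrC.
  have sx := shift_simplex _ _ _ a' b' sp.
  have := hstar_ge _ _ _ _ (y j) _ hB sx; rewrite dotp_shift.
  have := HM j; rewrite /fenchel => /(le_trans (ler_norm _)).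
  have := hB _ sx; have := hB _ (simplex_ri_simplex _ _ _ sp).
  move=> /ler_normlP [? ?] /ler_normlP [? ?] ? ?.
  lra.
exists ((M + 2 * B) / p ord0 b + (M + 2 * B) / p ord0 a) => j.
have Ka : 0 <= (M + 2 * B) / p ord0 a.
  by apply: divr_ge0; [lra | apply: ltW; case: sp].
have Kb : 0 <= (M + 2 * B) / p ord0 b.
  by apply: divr_ge0; [lra | apply: ltW; case: sp].
have := key j a b; have := key j b a.
rewrite ler_norml; move=> H1 H2; apply/andP; split; lra.
Qed.
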